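(* Let $G_1=(V,D_1)$ and $G_2=(V,D_2)$ be two simple directed graphs on the same node set $V$. If at least one of $G_1,G_2$ is not complete and there exists a node $i\in V$ such that $|\mathrm{ch}_1(i)|\neq|\mathrm{ch}_2(i)|$, then $G_1$ and $G_2$ have different Jacobian matroids.
   Context: A directed graph $G=(V,D)$ has a finite node set $V$ and edge set $D\subseteq V\times V$ of ordered pairs $(i,j)$, $i\neq j$, written $i\to j$. It is simple if $(i,j)$ and $(j,i)$ are never both in $D$. It is complete if every pair of distinct nodes is adjacent, i.e. joined by an edge in some direction. $\mathrm{ch}_k(i)=\{j:(i,j)\in D_k\}$ is the set of children of $i$ in $G_k$. For $G=(V,D)$ let $\Lambda=(\lambda_{ij})$ be the $V\times V$ matrix with indeterminate entries $\lambda_{ij}$ for $(i,j)\in D$ and zeros elsewhere, and let $s$ be a further indeterminate. The precision parameterization is $\psi_G(\Lambda,s)=s(I-\Lambda)(I-\Lambda)^T=K=(K_{ij})$. The (transposed) Jacobian $J=J(\psi_G)$ has one row for each parameter $\lambda_{kl}$, $(k,l)\in D$, and one row for $s$. It has one column for each entry $K_{ij}$ with $i\le j$ (equivalently, for each unordered pair $\{i,j\}$, including $i=j$). The entry in row $\theta$, column $K_{ij}$ is $\partial K_{ij}/\partial\theta$. The Jacobian matroid of $G$ is the matroid on this set of columns in which a set of columns is independent iff the columns are linearly independent over the field $\mathbb{R}(\lambda,s)$ of rational functions in the parameters. *)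

(* Defs.v *)
From HB Require Import structures.
From mathcomp Require Import all_boot all_order all_algebra.
From mathcomp Require Import fraction.
From mathcomp Require Import Rstruct.
From mathcomp.multinomials Require Import mpoly.
From Stdlib Require Rdefinitions.

Set Implicit Arguments.
Unset Strict Implicit.
Unset Printing Implicit Defensive.

Import GRing.Theory.
Local Open Scope ring_scope.

Definition digraph (n : nat) (D : {set 'I_n * 'I_n}) : Prop :=
  forall e, e \in D -> e.1 != e.2.

Definition simple_digraph (n : nat) (D : {set 'I_n * 'I_n}) : Prop :=
  forall i j : 'I_n, ~ ((i, j) \in D /\ (j, i) \in D).

Definition complete_digraph (n : nat) (D : {set 'I_n * 'I_n}) : Prop :=
  forall i j : 'I_n, i != j -> ((i, j) \in D) || ((j, i) \in D).

Definition ch (n : nat) (D : {set 'I_n * 'I_n}) (i : 'I_n) : {set 'I_n} :=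
  [set j | (i, j) \in D].

(* Indeterminates: lambda_{ij} is variable number i*n+j, s is variable n*n. *)
Definition nvars (n : nat) : nat := (n * n).+1.
Definition lam_idx (n : nat) (i j : 'I_n) : 'I_(nvars n) := inord (i * n + j).
Definition s_idx (n : nat) : 'I_(nvars n) := ord_max.

Definition polyR (n : nat) := {mpoly Rdefinitions.R[nvars n]}.
Definition ratfun (n : nat) := {fraction polyR n}.

Definition Lambda (n : nat) (D : {set 'I_n * 'I_n}) : 'M[polyR n]_n :=
  \matrix_(i, j) (if (i, j) \in D then 'X_(lam_idx i j) else 0).

Definition Kmat (n : nat) (D : {set 'I_n * 'I_n}) : 'M[polyR n]_n :=
  'X_(s_idx n) *: ((1%:M - Lambda D) *m (1%:M - Lambda D)^T).

(* columns: entries K_ij with i <= j (unordered pairs incl. i = j) *)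
Definition col_index (n : nat) := {p : 'I_n * 'I_n | (nat_of_ord p.1 <= nat_of_ord p.2)%N}.

Definition params (n : nat) (D : {set 'I_n * 'I_n}) : {set 'I_(nvars n)} :=
  s_idx n |: [set lam_idx e.1 e.2 | e in D].

(* The column of the (transposed) Jacobian corresponding to K_ij, as a column
   vector over R(lambda, s) indexed by the variables; the entry in row theta is
   dK_ij/dtheta for theta a parameter (rows of non-parameters are omitted by
   setting them to 0; they are identically 0 anyway). *)
Definition jac_column (n : nat) (D : {set 'I_n * 'I_n}) (c : col_index n)
  : 'cV[ratfun n]_(nvars n) :=
  \col_(t < nvars n)
     (if t \in params D
      then tofrac (mderiv t (Kmat D (val c).1 (val c).2))
      else 0).

Definition jac_indep (n : nat) (D : {set 'I_n * 'I_n}) (S : {set col_index n}) : bool :=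
  free [seq jac_column D c | c <- enum S].

Definition jacobian_matroid (n : nat) (D : {set 'I_n * 'I_n}) : {set {set col_index n}} :=
  [set S | jac_indep D S].

(* Main.v *)
Require Import Defs.
From mathcomp Require Import all_boot all_order all_algebra.
From mathcomp Require Import fraction Rstruct.
From mathcomp.multinomials Require Import mpoly.
From mathcomp Require Import zify.
From Stdlib Require Rdefinitions.
From mathcomp Require Import ring lra.
Set Implicit Arguments. Unset Strict Implicit. Unset Printing Implicit Defensive.
Import GRing.Theory Num.Theory.

Lemma mem_jm (m : nat) (D : {set 'I_m * 'I_m}) (S : {set col_index m}) :
  (S \in jacobian_matroid D) = jac_indep D S.
Proof. by rewrite /jacobian_matroid inE. Qed.

Section H.
Local Open Scope ring_scope.
Variable n : nat.
Lemma lam_val (i j : 'I_n) : nat_of_ord (lam_idx i j) = (i * n + j)%N.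
Proof. rewrite /lam_idx inordK // /nvars. have := ltn_ord i; have := ltn_ord j. nia. Qed.
Lemma s_val : nat_of_ord (s_idx n) = (n * n)%N.
Proof. by []. Qed.
Lemma lam_inj (i j i' j' : 'I_n) : lam_idx i j = lam_idx i' j' -> i = i' /\ j = j'.
Proof.
move/(congr1 (@nat_of_ord _)); rewrite !lam_val => H.
have := ltn_ord j; have := ltn_ord j'; move=> hj' hj.
have E1 : ((i * n + j) %/ n = i)%N by rewrite divnMDl ?divn_small ?addn0 //; lia.
have E2 : ((i * n + j) %% n = j)%N by rewrite modnMDl modn_small.
have E3 : ((i' * n + j') %/ n = i')%N by rewrite divnMDl ?divn_small ?addn0 //; lia.
have E4 : ((i' * n + j') %% n = j')%N by rewrite modnMDl modn_small.
split; apply/val_inj => /=. by rewrite -E1 -E3 H. by rewrite -E2 -E4 H.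
Qed.
Lemma lam_eq (i j i' j' : 'I_n) : (lam_idx i j == lam_idx i' j') = (i == i') && (j == j').
Proof.
apply/eqP/andP => [/lam_inj [-> ->] // | [/eqP -> /eqP ->] //].
Qed.
Lemma lam_neq_s (i j : 'I_n) : (lam_idx i j == s_idx n) = false.
Proof.
apply/negP => /eqP/(congr1 (@nat_of_ord _)); rewrite lam_val s_val.
have := ltn_ord i; have := ltn_ord j. nia.
Qed.
Definition decl (t : 'I_(nvars n)) : option ('I_n * 'I_n) :=
  [pick e : 'I_n * 'I_n | lam_idx e.1 e.2 == t].
Lemma decl_lam (i j : 'I_n) : decl (lam_idx i j) = Some (i, j).
Proof.
rewrite /decl; case: pickP => [[u w] /= /eqP /lam_inj [-> ->] //|].
by move/(_ (i, j)); rewrite eqxx.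
Qed.
Lemma decl_s : decl (s_idx n) = None.
Proof.
rewrite /decl; case: pickP => // [[u w]] /=; by rewrite lam_neq_s.
Qed.
End H.

Section H2.
Local Open Scope ring_scope.
Variable n : nat.
Implicit Types D : {set 'I_n * 'I_n}.

Lemma mderivXU (t u : 'I_(nvars n)) :
  mderiv t ('X_u : polyR n) = (u == t)%:R.
Proof.
rewrite /mpolyX mderivX mnm1E; case: eqP => [->|_].
  have -> : (U_(t) - U_(t) = 0)%MM by apply/mnmP => j; rewrite mnmBE subnn mnm0E.
  by rewrite mpolyX0 scale1r.
by rewrite scale0r.
Qed.

Definition Am D (a k : 'I_n) : polyR n := (1%:M - Lambda D) a k.

Lemma Am_E D a k : Am D a k =
  (a == k)%:R - (if (a, k) \in D then 'X_(lam_idx a k) else 0).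
Proof. by rewrite /Am !mxE. Qed.

Lemma Kmat_E D a b : Kmat D a b = 'X_(s_idx n) * \sum_k (Am D a k * Am D b k).
Proof.
rewrite /Kmat mxE [in LHS]mxE; apply: congr1; apply: eq_bigr => k _.
by rewrite [X in _ * X]mxE.
Qed.

Lemma Kmat_sym D a b : Kmat D a b = Kmat D b a.
Proof. by rewrite !Kmat_E; apply: congr1; apply: eq_bigr => k _; rewrite mulrC. Qed.

Lemma dAm D t a k : mderiv t (Am D a k) =
  - (((a, k) \in D) && (lam_idx a k == t))%:R.
Proof.
rewrite Am_E mderivB.
have -> : mderiv t ((a == k)%:R : polyR n) = 0.
  by rewrite -(@mpolyC_nat _ Rdefinitions.R) mderivC.
rewrite sub0r; case: ((a, k) \in D) => /=; first by rewrite mderivXU.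
by rewrite mderiv0 oppr0.
Qed.

Lemma dKmat D t a b : mderiv t (Kmat D a b) =
  (s_idx n == t)%:R * \sum_k (Am D a k * Am D b k) +
  'X_(s_idx n) * \sum_k (mderiv t (Am D a k) * Am D b k + Am D a k * mderiv t (Am D b k)).
Proof.
rewrite Kmat_E mderivM mderivXU; apply: congr1; apply: congr1.
rewrite raddf_sum; apply: eq_bigr => k _; exact: mderivM.
Qed.

Lemma dKmat_other D (u w a b : 'I_n) : u != a -> u != b ->
  mderiv (lam_idx u w) (Kmat D a b) = 0.
Proof.
move=> ua ub; rewrite dKmat eq_sym lam_neq_s mul0r add0r.
rewrite big1 ?mulr0 // => k _; rewrite !dAm !lam_eq.
have ua' : (a == u) = false by rewrite eq_sym (negbTE ua).
have ub' : (b == u) = false by rewrite eq_sym (negbTE ub).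
by rewrite ua' ub' /= !andbF !oppr0 mul0r mulr0 addr0.
Qed.
End H2.

Section H3.
Local Open Scope ring_scope.
Local Notation R := Rdefinitions.R.
Variable n : nat.
Implicit Types D : {set 'I_n * 'I_n}.

Definition pt (L : 'I_n -> 'I_n -> R) : 'I_(nvars n) -> R :=
  fun t => match decl t with Some e => L e.1 e.2 | None => 1 end.

Definition Ae (L : 'I_n -> 'I_n -> R) D (a k : 'I_n) : R :=
  (a == k)%:R - (if (a, k) \in D then L a k else 0).

Lemma ev_Am L D a k : (Am D a k).@[pt L] = Ae L D a k.
Proof.
rewrite Am_E /Ae mevalB -(@mpolyC_nat _ R) mevalC; congr (_ - _).
case: ifP => _; last by rewrite meval0.
by rewrite mevalXU /pt decl_lam.
Qed.

Lemma ev_Xs L : ('X_(s_idx n) : polyR n).@[pt L] = 1.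
Proof. by rewrite mevalXU /pt decl_s. Qed.

Lemma sum_delta (w : 'I_n) (f : 'I_n -> R) : \sum_k (k == w)%:R * f k = f w.
Proof.
rewrite (bigD1 w) //= eqxx mul1r big1 ?addr0 // => k /negPf ->.
by rewrite mul0r.
Qed.

Lemma sum2_delta (w : 'I_n) (c1 c2 : R) (f g : 'I_n -> R) :
  \sum_(i < n) - (c1 * (i == w)%:R) * f i + \sum_(i < n) g i * - (c2 * (i == w)%:R)
  = - (c1 * f w + c2 * g w).
Proof.
have S1 : \sum_(i < n) - (c1 * (i == w)%:R) * f i =
  \sum_(i < n) (i == w)%:R * (- (c1 * f i)).
  by apply: eq_bigr => i _; ring.
have S2 : \sum_(i < n) g i * - (c2 * (i == w)%:R) =
  \sum_(i < n) (i == w)%:R * (- (c2 * g i)).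
  by apply: eq_bigr => i _; ring.
rewrite S1 S2 !sum_delta; ring.
Qed.

Lemma ev_dK_s L D (a b : 'I_n) :
  (mderiv (s_idx n) (Kmat D a b)).@[pt L] = \sum_k Ae L D a k * Ae L D b k.
Proof.
rewrite dKmat eqxx mul1r [X in _ + _ * X]big1 ?mulr0 ?addr0; last first.
  by move=> k _; rewrite !dAm !lam_neq_s !andbF oppr0 mul0r mulr0 addr0.
rewrite (big_morph (meval (pt L)) (mevalD (pt L)) (meval0 (pt L))); apply: eq_bigr => k _; by rewrite mevalM !ev_Am.
Qed.

Lemma ev_dK_lam L D (a b u w : 'I_n) : (u, w) \in D ->
  (mderiv (lam_idx u w) (Kmat D a b)).@[pt L] =
  - ((a == u)%:R * Ae L D b w + (b == u)%:R * Ae L D a w).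
Proof.
move=> uwD; rewrite dKmat eq_sym lam_neq_s mul0r add0r mevalM ev_Xs mul1r.
rewrite (big_morph (meval (pt L)) (mevalD (pt L)) (meval0 (pt L))).
have E : forall x k : 'I_n, mderiv (lam_idx u w) (Am D x k) =
    - ((x == u)%:R * (k == w)%:R).
  move=> x k; rewrite dAm lam_eq; congr (- _).
  case: (x =P u) => [->|_]; case: (k =P w) => [->|_];
    by rewrite ?uwD ?andbF ?mulr0 ?mul0r ?mulr1.
under eq_bigr => k _ do rewrite mevalD !mevalM !E !mevalN !mevalM
  -!(@mpolyC_nat _ R) !mevalC !ev_Am.
rewrite big_split /=; exact: sum2_delta.
Qed.
End H3.

Section H4.
Local Open Scope ring_scope.
Local Notation R := Rdefinitions.R.
Variable n : nat.
Implicit Types D : {set 'I_n * 'I_n}.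

Definition polycol D (c : col_index n) : 'cV[polyR n]_(nvars n) :=
  \col_t (if t \in params D then mderiv t (Kmat D (val c).1 (val c).2) else 0).

Lemma jac_polycol D c : jac_column D c = map_mx (@tofrac (polyR n)) (polycol D c).
Proof.
apply/matrixP => t j; rewrite !mxE; case: ifP => _ //; by rewrite tofrac0.
Qed.

Definition mkpair (x y : 'I_n) := if (x <= y)%N then (x, y) else (y, x).
Lemma mkpair_ok x y : ((nat_of_ord (mkpair x y).1) <= (mkpair x y).2)%N.
Proof. rewrite /mkpair; case: (leqP x y) => h //=; exact: ltnW. Qed.
Definition mkcol x y : col_index n := exist _ (mkpair x y) (mkpair_ok x y).

Lemma polycol_mkcol D x y t : polycol D (mkcol x y) t 0 =
  if t \in params D then mderiv t (Kmat D x y) else 0.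
Proof. rewrite mxE /= /mkpair; case: (leqP x y) => _ //=; by rewrite Kmat_sym. Qed.

Lemma s_in_params D : s_idx n \in params D.
Proof. by rewrite /params setU11. Qed.

Lemma lam_in_params D (u w : 'I_n) : (u, w) \in D -> lam_idx u w \in params D.
Proof.
move=> uw; rewrite /params setU1r //; apply/imsetP; by exists (u, w).
Qed.

Lemma paramsP D t : t \in params D ->
  t = s_idx n \/ exists u w, (u, w) \in D /\ t = lam_idx u w.
Proof.
case/setU1P => [->|/imsetP [[u w] uw ->]]; [by left | right; by exists u, w].
Qed.

Lemma ev_col_s L D (x y : 'I_n) :
  (polycol D (mkcol x y) (s_idx n) 0).@[pt L] = \sum_k Ae L D x k * Ae L D y k.
Proof. by rewrite polycol_mkcol s_in_params ev_dK_s. Qed.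

Lemma ev_col_lam L D (x y u w : 'I_n) : (u, w) \in D ->
  (polycol D (mkcol x y) (lam_idx u w) 0).@[pt L] =
  - ((x == u)%:R * Ae L D y w + (y == u)%:R * Ae L D x w).
Proof. by move=> uw; rewrite polycol_mkcol lam_in_params // ev_dK_lam. Qed.

Lemma polycol_out D c t : t \notin params D -> polycol D c t 0 = 0.
Proof. by rewrite mxE => /negPf ->. Qed.

Lemma polycol_other D (x y u w : 'I_n) : u != x -> u != y ->
  polycol D (mkcol x y) (lam_idx u w) 0 = 0.
Proof.
by move=> ux uy; rewrite polycol_mkcol dKmat_other //; case: ifP.
Qed.
End H4.

Section H5.
Local Open Scope ring_scope.
Local Notation R := Rdefinitions.R.
Variable n : nat.

Lemma free_eval (m : nat) (x : 'I_(nvars n) -> R) (rs : seq 'I_m)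
  (F : 'I_m -> 'cV[polyR n]_m) (lvl : 'I_m -> nat) :
  uniq rs -> (forall t, t \in rs -> (F t t 0).@[x] != 0) ->
  (forall t t', t \in rs -> t' \in rs -> t != t' -> (lvl t <= lvl t')%N ->
     (F t' t 0).@[x] = 0) ->
  free [seq map_mx (@tofrac (polyR n)) (F t) | t <- rs].
Proof.
case: rs => [|t0 rs0]; first by rewrite nil_free.
move: (t0 :: rs0) => rs Hu H1 H2.
apply/(@freeP _ _ _ (in_tuple [seq map_mx (@tofrac (polyR n)) (F t) | t <- rs])) => k Hk i.
set N := size [seq map_mx (@tofrac (polyR n)) (F t) | t <- rs] in k Hk i *.
have sN : N = size rs by rewrite /N size_map.
pose r (j : 'I_N) := nth t0 rs j.
have rin j : r j \in rs by rewrite mem_nth // -sN.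
have rinj j j' : (r j == r j') = (j == j').
  by rewrite nth_uniq // -sN.
have snth (j : 'I_N) : [seq map_mx (@tofrac (polyR n)) (F t) | t <- rs]`_j =
    map_mx (@tofrac (polyR n)) (F (r j)).
  by rewrite (nth_map t0) // -sN.
pose A : 'M[polyR n]_N := \matrix_(i0, j) F (r i0) (r j) 0.
have C1 : \row_i0 k i0 *m map_mx (@tofrac (polyR n)) A = 0.
  apply/rowP => j; rewrite !mxE.
  have e := congr1 (fun M : 'cV__ => M (r j) 0) Hk; rewrite /= summxE mxE in e.
  apply: etrans e; apply: eq_bigr => i0 _; by rewrite !mxE snth !mxE mulrC.
have C2 : \det A != 0.
  apply/negP => /eqP dA.
  have : \det (map_mx (meval x) A) == 0 by rewrite (det_map_mx (meval x)) dA raddf0.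
  case/det0P => v vn0 vE; case/eqP: vn0.
  suff H : forall L j, (lvl (r j) < L)%N -> v 0 j = 0.
    by apply/rowP => j; rewrite mxE (H (lvl (r j)).+1).
  elim => [//|L IH] j hj.
  have e := congr1 (fun M : 'rV__ => M 0 j) vE; rewrite !mxE /= in e.
  rewrite (bigD1 j) //= big1 ?addr0 in e; last first.
    move=> i0 ij; case: (ltnP (lvl (r i0)) (lvl (r j))) => h.
      by rewrite (IH i0) ?mul0r // (leq_trans h).
    rewrite !mxE H2 ?mulr0 //; by rewrite rinj eq_sym.
  move/eqP: e; rewrite !mxE mulf_eq0 => /orP [/eqP //|].
  by rewrite (negbTE (H1 _ (rin j))).
have C3 : map_mx (@tofrac (polyR n)) A \in unitmx.
  by rewrite unitmxE det_map_mx unitfE tofrac_eq0.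
have := congr1 (mulmx^~ (invmx (map_mx (@tofrac (polyR n)) A))) C1.
rewrite /= mulmxK // mul0mx => /rowP /(_ i); by rewrite !mxE.
Qed.

Lemma not_free_supp (K : fieldType) (m : nat) (s : seq 'cV[K]_m) (Rw : {set 'I_m}) :
  (forall v, v \in s -> forall t, t \notin Rw -> v t 0 = 0) ->
  (#|Rw| < size s)%N -> ~~ free s.
Proof.
move=> Hs lt; apply/negP; rewrite /free => /eqP dimE.
pose E := [seq delta_mx t (0 : 'I_1) : 'cV[K]_m | t <- enum Rw].
have sub : (<<s>> <= <<E>>)%VS.
  apply/span_subvP => v vs.
  rewrite [v]matrix_sum_delta; apply: memv_suml => t _.
  apply: memv_suml => j _; rewrite (ord1 j).
  case: (boolP (t \in Rw)) => tR.
    by apply: memvZ; apply: memv_span; apply: map_f; rewrite mem_enum.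
  by rewrite Hs // scale0r mem0v.
have := dimvS sub; rewrite dimE => h.
have := leq_trans h (dim_span E); rewrite size_map -cardE.
by rewrite leqNgt lt.
Qed.
End H5.

Section H6.
Local Open Scope ring_scope.
Local Notation R := Rdefinitions.R.
Variable n : nat.
Implicit Types D : {set 'I_n * 'I_n}.

Lemma indep_of D (Rw : {set 'I_(nvars n)}) (g : 'I_(nvars n) -> col_index n) :
  free [seq jac_column D (g t) | t <- enum Rw] ->
  jac_indep D (g @: Rw) /\ #|g @: Rw| = #|Rw|.
Proof.
move=> fr; have u := free_uniq fr.
have ug : uniq [seq g t | t <- enum Rw].
  apply: (@map_uniq _ _ (jac_column D)); rewrite -map_comp; exact: u.
have e : [seq jac_column D c | c <- [seq g t | t <- enum Rw]] =
    [seq jac_column D (g t) | t <- enum Rw].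
  by rewrite -map_comp.
have pe : perm_eq (enum (g @: Rw)) [seq g t | t <- enum Rw].
  apply: uniq_perm; [exact: enum_uniq | exact: ug | move=> c].
  rewrite mem_enum. apply/imsetP/mapP.
    case=> t tR ->; exists t; [by rewrite mem_enum | by []].
  case=> t tR ->; exists t; [by move: tR; rewrite mem_enum | by []].
split.
  by rewrite /jac_indep (perm_free (perm_map _ pe)) e.
by rewrite cardE (perm_size pe) size_map -cardE.
Qed.

Lemma dep_of D (S : {set col_index n}) (Rw : {set 'I_(nvars n)}) :
  (forall c, c \in S -> forall t, t \notin Rw -> polycol D c t 0 = 0) ->
  (#|Rw| < #|S|)%N -> ~~ jac_indep D S.
Proof.
move=> Hs lt; apply: (@not_free_supp _ _ _ Rw); last by rewrite size_map -cardE.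
move=> v /mapP [c cS ->] t tR; rewrite jac_polycol mxE Hs ?tofrac0 //.
by rewrite -mem_enum.
Qed.

Definition lamE (e : 'I_n * 'I_n) : 'I_(nvars n) := @lam_idx n e.1 e.2.
Lemma lamE_inj : injective lamE.
Proof. move=> [u w] [u' w'] H; case: (lam_inj H) => H1 H2; simpl in H1, H2; by rewrite H1 H2. Qed.

Lemma card_params D : #|params D| = #|D|.+1.
Proof.
rewrite /params cardsU1 (card_imset _ lamE_inj).
suff -> : (s_idx n \notin [set lam_idx e.1 e.2 | e in D]) by [].
apply/imsetP => [[e _ /eqP]]; by rewrite eq_sym lam_neq_s.
Qed.

Definition RwT D (i : 'I_n) : {set 'I_(nvars n)} :=
  s_idx n |: [set lam_idx e.1 e.2 | e in [set e in D | e.1 != i]].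

Lemma card_RwT D i : #|RwT D i| = #|[set e in D | e.1 != i]|.+1.
Proof.
rewrite /RwT cardsU1 (card_imset _ lamE_inj).
suff -> : (s_idx n \notin [set lam_idx e.1 e.2 | e in [set e in D | e.1 != i]]) by [].
apply/imsetP => [[e _ /eqP]]; by rewrite eq_sym lam_neq_s.
Qed.

Lemma card_ch D i : #|ch D i| = #|[set e in D | e.1 == i]|.
Proof.
have -> : [set e in D | e.1 == i] = [set (i, w) | w in ch D i].
  apply/setP => [[u w]]; rewrite !inE /=; apply/andP/imsetP.
    move=> [uw /eqP ui]; subst u; exists w => //; by rewrite inE.
  case=> w' w'in [-> ->]; rewrite inE in w'in; by rewrite w'in eqxx.
by rewrite card_imset // => w w' [].
Qed.

Lemma card_split D i : #|D| = (#|[set e in D | e.1 != i]| + #|ch D i|)%N.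
Proof.
rewrite card_ch addnC -(cardID [pred e : 'I_n * 'I_n | e.1 == i] D).
by congr (_ + _)%N; apply: eq_card => e; rewrite !inE andbC.
Qed.

Lemma card_sum D : #|D| = (\sum_i #|ch D i|)%N.
Proof.
rewrite -sum1_card (partition_big (fun e : 'I_n * 'I_n => e.1) xpredT) //=.
apply: eq_bigr => i _; rewrite card_ch -sum1_card.
by apply: eq_bigl => e; rewrite inE.
Qed.

Lemma RwT_sub D i : RwT D i \subset params D.
Proof.
apply/subsetP => t; rewrite /RwT /params; case/setU1P => [->|]; first exact: setU11.
case/imsetP => e; rewrite inE => /andP [eD _] ->; apply: setU1r; exact: imset_f.
Qed.

Lemma RwTP D i t : t \in RwT D i ->
  t = s_idx n \/ exists u w, [/\ (u, w) \in D, u != i & t = lam_idx u w].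
Proof.
case/setU1P => [->|/imsetP [[u w]]]; first by left.
by rewrite inE => /andP [uw ui] ->; right; exists u, w.
Qed.

Lemma notin_RwT D i (u w : 'I_n) : (u, w) \in D -> lam_idx u w \notin RwT D i -> u = i.
Proof.
move=> uw; apply: contraNeq => ui; apply: setU1r; apply/imsetP.
by exists (u, w); rewrite // inE uw.
Qed.
End H6.

Section H7.
Local Open Scope ring_scope.
Local Notation R := Rdefinitions.R.
Variable n : nat.
Implicit Types D : {set 'I_n * 'I_n}.

Lemma noloop D (u w : 'I_n) : simple_digraph D -> (u, w) \in D -> u != w.
Proof. by move=> sD uw; apply/eqP => e; subst w; apply: (sD u u). Qed.

Lemma sum_dd (x y : 'I_n) : \sum_k (x == k)%:R * (y == k)%:R = (x == y)%:R :> R.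
Proof.
rewrite (bigD1 x) //= eqxx mul1r big1 ?addr0; first by rewrite eq_sym.
by move=> k /negPf; rewrite eq_sym => ->; rewrite mul0r.
Qed.

Lemma lamlam D (u w u' w' : 'I_n) : simple_digraph D -> (u, w) \in D ->
  (u', w') \in D -> lam_idx u w != lam_idx u' w' ->
  (u' == u)%:R * (w' == w)%:R + (w' == u)%:R * (u' == w)%:R = 0 :> R.
Proof.
move=> sD uw u'w'; rewrite lam_eq => ne.
case: (eqVneq u' u) => [e1|n1]; case: (eqVneq w' w) => [e2|n2];
  case: (eqVneq w' u) => [e3|n3]; case: (eqVneq u' w) => [e4|n4];
  rewrite ?(negbTE n1) ?(negbTE n2) ?(negbTE n3) ?(negbTE n4) ?mul0r ?mulr0 ?add0r ?addr0 //;
  subst; first [by rewrite !eqxx in ne | by move: (noloop sD uw); rewrite eqxx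
     | by move: (noloop sD u'w'); rewrite eqxx | by case: (sD u w)
     | by move: (noloop sD uw); rewrite ?eqxx ?e1 ?e2 ?e3 ?e4 | idtac].
Qed.

Lemma Ae0 D (a k : 'I_n) : Ae (fun _ _ => 0) D a k = (a == k)%:R.
Proof. by rewrite /Ae; case: ifP; rewrite subr0. Qed.

Definition gB (i : 'I_n) (t : 'I_(nvars n)) : col_index n :=
  match decl t with Some e => mkcol e.1 e.2 | None => mkcol i i end.

Lemma B_free D (i : 'I_n) : simple_digraph D ->
  free [seq jac_column D (gB i t) | t <- enum (params D)].
Proof.
move=> sD.
have -> : [seq jac_column D (gB i t) | t <- enum (params D)] =
   [seq map_mx (@tofrac (polyR n)) (polycol D (gB i t)) | t <- enum (params D)].
  by apply: eq_map => t; exact: jac_polycol.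
apply: (@free_eval n _ (pt (fun _ _ => 0)) _ _ (fun _ => 0%N)).
- exact: enum_uniq.
- move=> t; rewrite mem_enum => /paramsP [->|[u [w [uw ->]]]].
    by rewrite /gB decl_s ev_col_s; under eq_bigr do rewrite !Ae0;
      rewrite sum_dd eqxx oner_eq0.
  rewrite /gB decl_lam ev_col_lam //= !Ae0 !eqxx.
  rewrite [w == u]eq_sym (negbTE (noloop sD uw)) !mul0r addr0 mul1r oppr_eq0 oner_eq0 //.
- move=> t t'; rewrite !mem_enum => /paramsP [->|[u [w [uw ->]]]]
    /paramsP [->|[u' [w' [u'w' ->]]]] ne _.
  + by rewrite eqxx in ne.
  + rewrite /gB decl_lam ev_col_s /=; under eq_bigr do rewrite !Ae0.
    by rewrite sum_dd (negbTE (noloop sD u'w')).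
  + rewrite /gB decl_s ev_col_lam // !Ae0.
    case: (eqVneq i u) => [e|ne']; last by rewrite /=; ring.
    by subst; rewrite (negbTE (noloop sD uw)) /=; ring.
  + rewrite /gB decl_lam ev_col_lam //= !Ae0.
    by rewrite (lamlam sD uw u'w' ne) oppr0.
Qed.
End H7.

Section H8.
Local Open Scope ring_scope.
Local Notation R := Rdefinitions.R.
Variable n : nat.
Implicit Types D : {set 'I_n * 'I_n}.
Variables (i a b : 'I_n).

Definition gT (t : 'I_(nvars n)) : col_index n :=
  match decl t with
  | None => mkcol a a
  | Some e => if e.2 == i then (if e.1 == a then mkcol a b else mkcol e.1 e.1)
              else mkcol e.1 e.2
  end.
Definition lvlT (t : 'I_(nvars n)) : nat :=
  match decl t with None => 2%N | Some e => if e.2 == i then 1%N else 0%N end.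
Definition LT (u w : 'I_n) : R := ((w == i) && (u != a))%:R.

Lemma AeT_y D (v y : 'I_n) : y != i -> Ae LT D v y = (v == y)%:R.
Proof. by move=> yi; rewrite /Ae /LT (negbTE yi) /=; case: ifP; rewrite subr0. Qed.
Lemma AeT_a D (k : 'I_n) : Ae LT D a k = (a == k)%:R.
Proof. by rewrite /Ae /LT eqxx andbF /=; case: ifP; rewrite subr0. Qed.
Lemma AeT_p D (p : 'I_n) : simple_digraph D -> (p, i) \in D -> p != a ->
  Ae LT D p i = -1.
Proof.
move=> sD pi pa; rewrite /Ae /LT pi eqxx pa (negbTE (noloop sD pi)) /=.
by rewrite sub0r.
Qed.

Lemma diag_zero (x u w : 'I_n) : u != w -> (x == u)%:R * (x == w)%:R = 0 :> R.
Proof.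
move=> uw; case: (eqVneq x u) => [e|ne]; last by rewrite /= mul0r.
by subst; rewrite (negbTE uw) mulr0.
Qed.

Lemma nonadj_zero D (x y u w : 'I_n) : (u, w) \in D -> (x, y) \notin D ->
  (y, x) \notin D -> (x == u)%:R * (y == w)%:R + (y == u)%:R * (x == w)%:R = 0 :> R.
Proof.
move=> uw xy yx.
have h1 : (x == u) && (y == w) = false.
  by apply/negP => /andP [/eqP e1 /eqP e2]; subst; rewrite uw in xy.
have h2 : (y == u) && (x == w) = false.
  by apply/negP => /andP [/eqP e1 /eqP e2]; subst; rewrite uw in yx.
by rewrite -!natrM -!/(nat_of_bool _ * nat_of_bool _)%N -!natrD /= !mulnb h1 h2.
Qed.

Lemma T_free D : simple_digraph D -> a != i ->
  ((a, i) \notin D \/ [/\ (b, i) \in D, b != a, (a, b) \notin D & (b, a) \notin D]) ->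
  free [seq jac_column D (gT t) | t <- enum (RwT D i)].
Proof.
move=> sD ai hab.
have -> : [seq jac_column D (gT t) | t <- enum (RwT D i)] =
   [seq map_mx (@tofrac (polyR n)) (polycol D (gT t)) | t <- enum (RwT D i)].
  by apply: eq_map => t; exact: jac_polycol.
apply: (@free_eval n _ (pt LT) _ _ lvlT).
- exact: enum_uniq.
- move=> t; rewrite mem_enum => /RwTP [->|[u [w [uw ui ->]]]].
    rewrite /gT decl_s ev_col_s; under eq_bigr do rewrite !AeT_a.
    by rewrite sum_dd eqxx oner_eq0.
  rewrite /gT decl_lam /=.
  case: (eqVneq w i) => [wi|wi].
    subst w; case: (eqVneq u a) => [ua|ua].
      subst u; case: hab => [/negP //|[bi ba _ _]].
      rewrite ev_col_lam // eqxx (negbTE ba) (AeT_p sD bi ba) /=.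
      apply/eqP => H; lra.
    rewrite ev_col_lam // eqxx (AeT_p sD uw ua) /=.
    apply/eqP => H; lra.
  rewrite ev_col_lam // eqxx (AeT_y _ _ wi) eqxx [w == u]eq_sym (negbTE (noloop sD uw)) /=.
  apply/eqP => H; lra.
- move=> t t'; rewrite !mem_enum => /RwTP [->|[u [w [uw ui ->]]]]
    /RwTP [->|[u' [w' [u'w' u'i ->]]]] ne.
  + by rewrite eqxx in ne.
  + by rewrite /lvlT decl_s decl_lam; case: ifP.
  + move=> _; rewrite /gT decl_s ev_col_lam // !AeT_a.
    case: (eqVneq a u) => [e|ne']; last by rewrite /=; ring.
    by subst; rewrite (negbTE (noloop sD uw)) /=; ring.
  + rewrite /lvlT /gT !decl_lam /=.
    case: (eqVneq w i) => [wi|wi].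
      subst w; case: (eqVneq w' i) => [wi'|wi']; last by [].
      subst w' => _.
      have uu' : u != u' by move: ne; rewrite lam_eq eqxx andbT.
      case: (eqVneq u' a) => [ua'|ua'].
        subst u'; rewrite ev_col_lam // AeT_a (negbTE ai) [a == u]eq_sym (negbTE uu') /=.
        ring.
      rewrite ev_col_lam // [u' == u]eq_sym (negbTE uu') /=; ring.
    move=> _; case: (eqVneq w' i) => [wi'|wi'].
      subst w'; case: (eqVneq u' a) => [ua'|ua'].
        subst u'; case: hab => [/negP //|[bi ba ab ba']].
        rewrite ev_col_lam // !(AeT_y _ _ wi) (nonadj_zero uw ab ba'); ring.
      rewrite ev_col_lam // !(AeT_y _ _ wi) (diag_zero _ (noloop sD uw)); ring.
    rewrite ev_col_lam // !(AeT_y _ _ wi) (lamlam sD uw u'w' ne); ring.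
Qed.
End H8.

Section H9.
Local Open Scope ring_scope.
Variable n : nat.
Implicit Types D : {set 'I_n * 'I_n}.

Lemma gT_shape (i a b : 'I_n) D t : a != i -> b != i -> t \in RwT D i ->
  exists x y, [/\ gT i a b t = mkcol x y, x != i & y != i].
Proof.
move=> ai bi /RwTP [->|[u [w [uw ui ->]]]].
  by exists a, a; rewrite /gT decl_s.
rewrite /gT decl_lam /=; case: (eqVneq w i) => [wi|wi].
  case: (eqVneq u a) => [ua|ua]; first by exists a, b.
  by exists u, u.
by exists u, w.
Qed.

Lemma supp_T D (x y i : 'I_n) t : x != i -> y != i -> t \notin RwT D i ->
  polycol D (mkcol x y) t 0 = 0.
Proof.
move=> xi yi tR; case: (boolP (t \in params D)) => tp; last exact: polycol_out.
case: (paramsP tp) => [e|[u [w [uw e]]]]; subst t.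
  by move: tR; rewrite /RwT setU11.
have ui := notin_RwT uw tR; subst u.
by apply: polycol_other; rewrite eq_sym.
Qed.

Lemma exists_lt (f g : 'I_n -> nat) (i0 : 'I_n) :
  (\sum_i f i = \sum_i g i)%N -> f i0 != g i0 -> exists i, (f i < g i)%N.
Proof.
move=> E ne; case: (boolP [exists i, (f i < g i)%N]) => [/existsP //|/existsPn H].
exfalso.
have lt : (g i0 < f i0)%N by rewrite ltn_neqAle eq_sym ne leqNgt H.
have : (\sum_i g i < \sum_i f i)%N.
  rewrite (bigD1 i0) //= [X in (_ < X)%N](bigD1 i0) //=.
  rewrite -addSn leq_add // leq_sum // => i _; by rewrite leqNgt H.
by rewrite E ltnn.
Qed.

Lemma pick_ab D (i : 'I_n) : simple_digraph D -> ~ complete_digraph D ->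
  exists a b, [/\ a != i, b != i &
   ((a, i) \notin D \/ [/\ (b, i) \in D, b != a, (a, b) \notin D & (b, a) \notin D])].
Proof.
move=> sD nc.
have [x [y [xy nxy nyx]]] : exists x y, [/\ x != y, (x, y) \notin D & (y, x) \notin D].
  case: (boolP [exists x, exists y, (x != y) && ~~ (((x, y) \in D) || ((y, x) \in D))]).
    move=> /existsP [x /existsP [y /andP [xy]]]; rewrite negb_or => /andP [h1 h2].
    by exists x, y.
  move=> /existsPn H; exfalso; apply: nc => x y xy.
  by move: (H x) => /existsPn /(_ y); rewrite xy /= negbK.
case: (eqVneq x i) => [xi|xi].
  subst x; exists y, y; split; [by rewrite eq_sym | by rewrite eq_sym | by left].
case: (eqVneq y i) => [yi|yi].
  subst y; exists x, x; split => //; by left.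
case: (boolP ((x, i) \in D)) => [xiD|xiD]; last by exists x, x; split => //; left.
case: (boolP ((y, i) \in D)) => [yiD|yiD]; last by exists y, y; split => //; left.
exists x, y; split => //; right; split => //; by rewrite eq_sym.
Qed.

Lemma main_thm D1 D2 : simple_digraph D1 -> simple_digraph D2 ->
  ~ complete_digraph D1 -> (exists i : 'I_n, #|ch D1 i| != #|ch D2 i|) ->
  jacobian_matroid D1 <> jacobian_matroid D2.
Proof.
move=> s1 s2 nc [i0 hi0] E.
have EI : forall S, jac_indep D1 S = jac_indep D2 S.
  move=> S; have h := f_equal (fun M : {set {set col_index n}} => S \in M) E.
  rewrite -(mem_jm D1 S) -(mem_jm D2 S); exact: h.
case: (ltngtP #|D1| #|D2|) => hD.
- have [ind cS] := indep_of (B_free i0 s2).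
  have dep : ~~ jac_indep D1 (gB i0 @: params D2).
    apply: (@dep_of _ _ _ (params D1)).
      by move=> c _ t tp; apply: polycol_out.
    by rewrite cS !card_params ltnS.
  by rewrite EI ind in dep.
- have [ind cS] := indep_of (B_free i0 s1).
  have dep : ~~ jac_indep D2 (gB i0 @: params D1).
    apply: (@dep_of _ _ _ (params D2)).
      by move=> c _ t tp; apply: polycol_out.
    by rewrite cS !card_params ltnS.
  by rewrite -EI ind in dep.
have [i hi] : exists i, (#|ch D1 i| < #|ch D2 i|)%N.
  apply: (exists_lt (i0 := i0)) => /=; last exact: hi0.
  by rewrite -(card_sum D1) -(card_sum D2).
have [a [b [ai bi hab]]] := pick_ab i s1 nc.
have [ind cS] := indep_of (T_free s1 ai hab).
have dep : ~~ jac_indep D2 (gT i a b @: RwT D1 i).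
  apply: (@dep_of _ _ _ (RwT D2 i)).
    move=> c /imsetP [t tR ->] t' t'R.
    have [x [y [-> xi yi]]] := gT_shape ai bi tR.
    exact: (@supp_T D2 x y i t' xi yi t'R).
  rewrite cS !card_RwT ltnS.
  have e1 := card_split D1 i; have e2 := card_split D2 i.
  rewrite hD in e1.
  move: hi; rewrite -(ltn_add2l #|[set e in D2 | e.1 != i]|) -e2 e1.
  by rewrite ltn_add2r.
case/negP: dep; rewrite -(EI (gT i a b @: RwT D1 i)); exact: ind.
Qed.
End H9.

Theorem theorem4p5 (n : nat) (D1 D2 : {set 'I_n * 'I_n}) :
  digraph D1 -> digraph D2 ->
  simple_digraph D1 -> simple_digraph D2 ->
  (~ complete_digraph D1 \/ ~ complete_digraph D2) ->
  (exists i : 'I_n, #|ch D1 i| != #|ch D2 i|) ->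
  jacobian_matroid D1 <> jacobian_matroid D2.
Proof.
move=> _ _ s1 s2 [nc|nc] ex.
  exact: (@main_thm n D1 D2 s1 s2 nc ex).
move=> E.
have ex' : exists i : 'I_n, #|ch D2 i| != #|ch D1 i|.
  by case: ex => i h; exists i; rewrite eq_sym.
exact: (@main_thm n D2 D1 s2 s1 nc ex' (esym E)).
Qed.
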